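(* Let $\Gamma$ be a connected signed graph on $N$ vertices. Then $\mathcal{M}(\Gamma(t))$ is a polynomial in $t$ of the form \[ \mathcal{M}(\Gamma(t))=\sum_{k=c(\Gamma_+)-1}^{N-c(\Gamma_-)} a_k(-t)^k,\qquad a_k=\sum_{T\in\mathcal{ST}_k(\Gamma)}|\pi(T)|, \] where all coefficients $a_k$ are non-negative, and the first and last coefficients $a_{c(\Gamma_+)-1}$ and $a_{N-c(\Gamma_-)}$ are strictly positive.
   Context: A signed graph $\Gamma$ is a finite simple undirected graph with vertex set $\{1,\dots,N\}$ in which every edge $\{i,j\}$ carries a nonzero real weight $\gamma_{ij}$, which may be of either sign. $\Gamma_+$ (resp. $\Gamma_-$) is the spanning subgraph on all vertices containing exactly the positively (resp. negatively) weighted edges; $c(H)$ is the number of connected components of a graph $H$. For real $t$, $\Gamma(t)$ is the weighted graph with the same edges as $\Gamma$ and weights $\gamma_{ij}(t)=\gamma_{ij}$ if $\gamma_{ij}>0$ and $\gamma_{ij}(t)=t\gamma_{ij}$ if $\gamma_{ij}<0$. For a tree $T$ with weighted edges, $\pi(T)=\prod_{\{i,j\}\in E(T)}\gamma_{ij}$ (product of weights of $\Gamma$). $\mathcal{ST}(\Gamma)$ is the set of spanning trees of $\Gamma$ and $\mathcal{ST}_k(\Gamma)$ the set of spanning trees having exactly $k$ edges in $\Gamma_-$. For a weighted graph $H$, $\mathcal{M}(H)=\sum_{T\in\mathcal{ST}(H)}\prod_{e\in E(T)}w_H(e)$, where $w_H$ denotes the weights of $H$; equivalently (Kirchhoff's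 weighted matrix tree theorem) $\mathcal{M}(H)=\frac{(-1)^{n-1}}{n}\prod_{i=2}^n\lambda_i$, where $n=|V(H)|$ and $\lambda_1=0,\lambda_2,\dots,\lambda_n$ are the eigenvalues of the Laplacian $\mathcal{L}(H)$ (off-diagonal entries the weights, diagonal entries minus the row sums of the weights). *)

(* Defs.v *)
From mathcomp Require Import all_boot all_order all_algebra.
Set Implicit Arguments. Unset Strict Implicit. Unset Printing Implicit Defensive.
Import Order.TTheory GRing.Theory Num.Theory.
Local Open Scope ring_scope.

(* A signed graph on vertex set 'I_N is given by a weight function
   g : 'I_N -> 'I_N -> R; {i,j} is an edge iff g i j != 0. *)
Definition signed_graph (R : realFieldType) (N : nat) (g : 'I_N -> 'I_N -> R) :=
  (forall i j, g i j = g j i) /\ (forall i, g i i = 0).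

Section Defs.
Variables (R : realFieldType) (N : nat) (g : 'I_N -> 'I_N -> R).

Definition edges : {set {set 'I_N}} :=
  [set e | [exists i, exists j, (i != j) && (g i j != 0) && (e == [set i; j])]].

Definition connected_rel (e : rel 'I_N) := forall i j, connect e i j.

Definition ncomp (e : rel 'I_N) : nat := n_comp e 'I_N.

Definition pos_rel : rel 'I_N := fun i j => 0 < g i j.
Definition neg_rel : rel 'I_N := fun i j => g i j < 0.
Definition adj_rel : rel 'I_N := fun i j => g i j != 0.

Definition rel_of (F : {set {set 'I_N}}) : rel 'I_N :=
  fun i j => [set i; j] \in F.

Definition spanning_tree (F : {set {set 'I_N}}) : bool :=
  [&& F \subset edges, #|F| == N.-1 &
      [forall i, forall j, connect (rel_of F) i j]].

Definition edge_prod (w : 'I_N -> 'I_N -> R) (F : {set {set 'I_N}}) : R :=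
  \prod_(i : 'I_N) \prod_(j : 'I_N | (i < j)%N && ([set i; j] \in F)) w i j.

Definition piT (F : {set {set 'I_N}}) : R := edge_prod g F.

Definition Mw (w : 'I_N -> 'I_N -> R) : R :=
  \sum_(F : {set {set 'I_N}} | spanning_tree F) edge_prod w F.

Definition gamma_t (t : R) : 'I_N -> 'I_N -> R :=
  fun i j => if 0 < g i j then g i j else t * g i j.

Definition neg_edge (e : {set 'I_N}) : bool :=
  [exists i, exists j, (e == [set i; j]) && (g i j < 0)].

Definition spanning_tree_k (k : nat) (F : {set {set 'I_N}}) : bool :=
  spanning_tree F && (#|[set e in F | neg_edge e]| == k).

Definition coef_a (k : nat) : R :=
  \sum_(F : {set {set 'I_N}} | spanning_tree_k k F) `|piT F|.

End Defs.

(* Main.v *)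
Require Import Defs.
From mathcomp Require Import all_boot all_order all_algebra.
From mathcomp Require Import zify.
From Stdlib Require Import Classical.
Set Implicit Arguments. Unset Strict Implicit. Unset Printing Implicit Defensive.
Import Order.TTheory GRing.Theory Num.Theory.

Local Notation rt := fingraph.root.
Section Conn.
Variable N : nat.
Implicit Types (r e : rel 'I_N) (S : {set {set 'I_N}}).

Lemma set2_eq (x y u v : 'I_N) : [set x; y] = [set u; v] ->
  (x = u /\ y = v) \/ (x = v /\ y = u).
Proof.
move=> E.
have hx : x \in [set u; v] by rewrite -E set21.
have hy : y \in [set u; v] by rewrite -E set22.
have hu : u \in [set x; y] by rewrite E set21.
have hv : v \in [set x; y] by rewrite E set22.
case/set2P: hx => ex; case/set2P: hy => ey; subst; auto;
  [move/set2P: hv => [] ev | move/set2P: hu => [] ev]; subst; auto.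
Qed.

Lemma NC r (phi : 'I_N -> 'I_N) : connect_sym r ->
  (forall x y, connect r x y = (phi x == phi y)) ->
  ncomp r = #|phi @: 'I_N|.
Proof.
move=> sym Hphi.
rewrite /ncomp /n_comp_mem.
have -> : #|predI (roots r) (mem 'I_N)| = #|[set x | roots r x]|.
  by apply: eq_card => x; rewrite !inE andbT.
have -> : phi @: 'I_N = phi @: [set x | roots r x].
  apply/setP => w; apply/imsetP/imsetP => [[x _ ->]|[x _ ->]]; last by exists x.
  exists (rt r x); first by rewrite inE /roots root_root.
  by apply/eqP; rewrite -Hphi connect_root.
rewrite card_in_imset // => a b; rewrite !inE /roots => /eqP ra /eqP rb /eqP.
by rewrite -Hphi -root_connect // ra rb => /eqP.
Qed.

Definition addE r (u v : 'I_N) : rel 'I_N :=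
  fun x y => ([set x; y] == [set u; v]) || r x y.

Lemma addE_sym r u v : symmetric r -> symmetric (addE r u v).
Proof. by move=> s x y; rewrite /addE setUC s. Qed.

Definition mrg r (u v : 'I_N) (z : 'I_N) :=
  if rt r z == rt r v then rt r u else rt r z.

Lemma merge r u v x y : symmetric r ->
  connect (addE r u v) x y = (mrg r u v x == mrg r u v y).
Proof.
move=> sr; have cs := sym_connect_sym sr.
have cs' := sym_connect_sym (addE_sym u v sr).
have sub : subrel (connect r) (connect (addE r u v)).
  by apply: connect_sub => a b rab; apply: connect1; rewrite /addE rab orbT.
have uv : connect (addE r u v) u v by apply: connect1; rewrite /addE eqxx.
apply/idP/idP.
  move=> cxy.
  have cl : closed (addE r u v) [pred z | mrg r u v z == mrg r u v x].
    move=> a b; rewrite /addE => /orP[/eqP/set2_eq [[-> ->]|[-> ->]]|rab].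
    - by rewrite !inE /mrg eqxx if_same.
    - by rewrite !inE /mrg eqxx if_same.
    - rewrite !inE /mrg; have /fingraph.rootP -> // := connect1 rab.
  by have := closed_connect cl cxy; rewrite !inE eqxx eq_sym => <-.
rewrite /mrg.
have rc : forall a b, rt r a = rt r b -> connect (addE r u v) a b.
  by move=> a b /fingraph.rootP -/(_ cs) /sub.
have cvx : forall a, rt r a = rt r v -> connect (addE r u v) a u.
  move=> a /rc H; apply: connect_trans H _; by rewrite cs'.
case: (rt r x =P rt r v) => hx; case: (rt r y =P rt r v) => hy /eqP E.
- by apply: connect_trans (cvx _ hx) _; rewrite cs'; apply: cvx.
- by apply: connect_trans (cvx _ hx) _; apply: rc.
- by apply: connect_trans (rc _ _ E) _; rewrite cs'; apply: cvx.
- exact: rc.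
Qed.

Lemma K r u v : symmetric r ->
  ncomp r = ncomp (addE r u v) + ~~ connect r u v.
Proof.
move=> sr; have cs := sym_connect_sym sr.
have cs' := sym_connect_sym (addE_sym u v sr).
rewrite (NC (phi := rt r) cs); last by move=> x y; rewrite root_connect.
rewrite (NC (phi := mrg r u v) cs'); last by move=> x y; rewrite merge.
case: (boolP (connect r u v)) => cuv.
  rewrite addn0; suff -> : mrg r u v @: 'I_N = rt r @: 'I_N by [].
  apply: eq_imset => z; rewrite /mrg.
  have /fingraph.rootP ruv := cuv; rewrite ruv //; by case: eqP.
have ruv : rt r u != rt r v by rewrite root_connect.
have -> : mrg r u v @: 'I_N = (rt r @: 'I_N) :\ rt r v.
  apply/setP => w; rewrite !inE; apply/imsetP/andP.
    move=> [z _ ->]; rewrite /mrg; case: (rt r z =P rt r v) => h; split.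
    - exact: ruv.
    - by apply/imsetP; exists u.
    - by apply/eqP.
    - by apply/imsetP; exists z.
  move=> [wv /imsetP[z _ Ez]]; exists z => //; rewrite /mrg -Ez.
  by rewrite (negbTE wv).
rewrite (cardsD1 (rt r v) (rt r @: 'I_N)).
have -> : rt r v \in rt r @: 'I_N by apply/imsetP; exists v.
by rewrite addnC.
Qed.

Lemma K_redundant r u v x y : symmetric r -> connect r u v ->
  connect (addE r u v) x y = connect r x y.
Proof.
move=> sr cuv; rewrite merge // /mrg.
have cs := sym_connect_sym sr.
have /fingraph.rootP ruv := cuv; rewrite ruv //.
have E z : (if rt r z == rt r v then rt r v else rt r z) = rt r z.
  by case: eqP.
by rewrite !E root_connect.
Qed.


Lemma ncomp_eq r r' : r =2 r' -> ncomp r = ncomp r'.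
Proof. by move=> H; rewrite /ncomp (eq_n_comp (eq_connect H)). Qed.

Definition Ru e S : rel 'I_N := fun x y => ([set x; y] \in S) || e x y.

Lemma Ru_sym e S : symmetric e -> symmetric (Ru e S).
Proof. by move=> s x y; rewrite /Ru setUC s. Qed.

Lemma Ru_add e S u v :
  Ru e ([set u; v] |: S) =2 addE (Ru e S) u v.
Proof. by move=> x y; rewrite /Ru /addE in_setU1 orbA. Qed.

Lemma Ru_sub e S S' : S \subset S' -> subrel (connect (Ru e S)) (connect (Ru e S')).
Proof.
move=> sS; apply: connect_sub => x y; rewrite /Ru => /orP[h|h]; apply: connect1.
  by rewrite (subsetP sS _ h).
by rewrite h orbT.
Qed.

Definition twosets S := forall s, s \in S -> exists u v, s = [set u; v].

Lemma L1 e S : symmetric e -> twosets S -> ncomp e <= ncomp (Ru e S) + #|S|.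
Proof.
move=> se; move: {2}#|S| (erefl #|S|) => n; elim: n S => [|n IH] S cS tS.
  move: cS => /eqP; rewrite cards_eq0 => /eqP ->.
  by rewrite cards0 addn0 (@ncomp_eq (Ru e set0) e) // => x y; rewrite /Ru in_set0.
have [s sS] : exists s, s \in S.
  by apply/set0Pn; rewrite -card_gt0 cS.
have [u [v es]] := tS s sS.
have cS0 : #|S :\ s| = n by move: cS; rewrite (cardsD1 s) sS => -[].
have tS0 : twosets (S :\ s) by move=> t; rewrite inE => /andP[_ /tS].
have := IH _ cS0 tS0.
rewrite (K u v (Ru_sym _ se)).
rewrite -(ncomp_eq (Ru_add e (S :\ s) u v)) -es setD1K // => H.
apply: leq_trans H _; rewrite cS; case: (~~ _); lia.
Qed.

Lemma L2 e S : symmetric e -> twosets S ->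
  (forall s u v, s \in S -> s = [set u; v] -> ~~ connect (Ru e (S :\ s)) u v) ->
  ncomp e = ncomp (Ru e S) + #|S|.
Proof.
move=> se; move: {2}#|S| (erefl #|S|) => n; elim: n S => [|n IH] S cS tS hS.
  move: cS => /eqP; rewrite cards_eq0 => /eqP ->.
  by rewrite cards0 addn0 (@ncomp_eq (Ru e set0) e) // => x y; rewrite /Ru in_set0.
have [s sS] : exists s, s \in S.
  by apply/set0Pn; rewrite -card_gt0 cS.
have [u [v es]] := tS s sS.
have cS0 : #|S :\ s| = n by move: cS; rewrite (cardsD1 s) sS => -[].
have tS0 : twosets (S :\ s) by move=> t; rewrite inE => /andP[_ /tS].
have hS0 : forall t u' v', t \in S :\ s -> t = [set u'; v'] ->
    ~~ connect (Ru e ((S :\ s) :\ t)) u' v'.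
  move=> t u' v' tS' et; apply: contra (hS t u' v' _ et).
    by apply: Ru_sub; apply: setSD; apply: subD1set.
  by move: tS'; rewrite inE => /andP[].
rewrite (IH _ cS0 tS0 hS0).
rewrite (K u v (Ru_sym _ se)).
rewrite -(ncomp_eq (Ru_add e (S :\ s) u v)) -es setD1K //.
by rewrite (hS s u v sS es) cS cS0; lia.
Qed.

Lemma ncomp_conn r : (0 < N)%N -> connect_sym r -> (forall x y, connect r x y) ->
  ncomp r = 1%N.
Proof.
move=> N0 cs H; set x0 : 'I_N := Ordinal N0.
rewrite (@NC r (fun _ => x0) cs) ?eqxx //.
suff -> : (fun _ => x0) @: 'I_N = [set x0] by rewrite cards1.
apply/setP => w; rewrite inE; apply/imsetP/eqP => [[z _ ->] //|->].
by exists x0.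
Qed.

Lemma ncomp_empty : ncomp (fun _ _ : 'I_N => false) = N.
Proof.
rewrite (@NC _ id).
- suff -> : id @: 'I_N = [set: 'I_N] by rewrite cardsT card_ord.
  by apply/setP => w; rewrite inE; apply/imsetP; exists w.
- by apply: sym_connect_sym.
move=> x y; apply/idP/eqP => [/connectP[[|a p] /= _ ->] //|->]; exact: connect0.
Qed.

Lemma ncomp_gt0 r : (0 < N)%N -> connect_sym r -> (0 < ncomp r)%N.
Proof.
move=> N0 cs; rewrite (@NC r (rt r) cs); last by move=> x y; rewrite root_connect.
by rewrite card_gt0; apply/set0Pn; exists (rt r (Ordinal N0)); apply/imsetP; exists (Ordinal N0).
Qed.

End Conn.

Lemma card_split (T : finType) (F : {set T}) (P : pred T) :
  (#|[set e in F | P e]| + #|[set e in F | ~~ P e]|)%N = #|F|.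
Proof.
rewrite -(cardsID [set e | P e] F).
have -> : [set e in F | P e] = F :&: [set e | P e] by apply/setP => e; rewrite !inE.
have -> : [set e in F | ~~ P e] = F :\: [set e | P e] by apply/setP => e; rewrite !inE andbC.
by [].
Qed.

Section G.
Variables (R : realFieldType) (N : nat) (g : 'I_N -> 'I_N -> R).
Hypothesis gsym : forall i j, g i j = g j i.
Hypothesis gdiag : forall i, g i i = 0%R.
Implicit Types F : {set {set 'I_N}}.

Local Notation E := (edges g).

Lemma edge_in x y : ([set x; y] \in E) = (x != y) && (g x y != 0%R).
Proof.
rewrite inE; apply/existsP/andP => [[i /existsP[j /andP[/andP[ij gij] /eqP es]]]|[xy gxy]].
  case: (set2_eq es) => [[-> ->]|[-> ->]]; first by [].
  by rewrite eq_sym gsym.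
by exists x; apply/existsP; exists y; rewrite xy gxy eqxx.
Qed.

Lemma edge2 : twosets E.
Proof.
move=> s; rewrite inE => /existsP[i /existsP[j /andP[_ /eqP ->]]]; by exists i, j.
Qed.

Lemma twosets_sub F : F \subset E -> twosets F.
Proof. by move=> sF s /(subsetP sF) /edge2. Qed.

Lemma neg_two x y : neg_edge g [set x; y] = (g x y < 0)%R.
Proof.
apply/existsP/idP => [[i /existsP[j /andP[/eqP es gij]]]|gxy].
  by case: (set2_eq es) => [[-> ->]|[-> ->]]; rewrite // gsym.
by exists x; apply/existsP; exists y; rewrite eqxx.
Qed.

Lemma rel_ofE F : rel_of F =2 Ru (fun _ _ => false) F.
Proof. by move=> x y; rewrite /Ru orbF. Qed.

Definition good F := (F \subset E) && [forall i, forall j, connect (rel_of F) i j].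

Section Sig.
Variables (sigma : {set 'I_N} -> bool) (rho : rel 'I_N).
Hypothesis rsym : symmetric rho.
Hypothesis H1 : forall x y, rho x y -> ([set x; y] \in E) && ~~ sigma [set x; y].
Hypothesis H2 : forall x y, [set x; y] \in E -> ~~ sigma [set x; y] -> rho x y.

Lemma sub_rel F : F \subset E ->
  subrel (rel_of F) (connect (Ru rho [set e in F | sigma e])).
Proof.
move=> sF x y Fxy; apply: connect1; rewrite /Ru inE; move: Fxy; rewrite /rel_of => Fxy.
rewrite Fxy /=.
case: (boolP (sigma _)) => //= ns; apply: H2 => //; exact: (subsetP sF).
Qed.

Lemma bound F : (0 < N)%N -> spanning_tree g F -> (ncomp rho <= #|[set e in F | sigma e]|.+1)%N.
Proof.
move=> N0; case/and3P => sF _ /forallP cF.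
have tS : twosets [set e in F | sigma e].
  by apply: twosets_sub; apply: subset_trans sF; apply/subsetP => e; rewrite inE => /andP[].
have := L1 rsym tS.
have c : forall x y, connect (Ru rho [set e in F | sigma e]) x y.
  move=> x y; apply: (connect_sub (sub_rel sF)).
  by have /forallP := cF x; apply.
rewrite (ncomp_conn N0 (sym_connect_sym (Ru_sym _ rsym)) c); lia.
Qed.
Lemma exist_tree : (0 < N)%N -> connected_rel (adj_rel g) ->
  exists F, spanning_tree g F && (#|[set e in F | sigma e]| <= (ncomp rho).-1)%N.
Proof.
move=> N0 cg.
pose K := #|E|.+1.
pose mu F := (#|[set e in F | sigma e]| * K + #|F|)%N.
have gE : good E.
  rewrite /good subxx /=; apply/forallP => i; apply/forallP => j.
  apply: (connect_sub _ (cg i j)) => a b; rewrite /adj_rel => ab; apply: connect1.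
  rewrite /rel_of edge_in ab andbT; apply: contraNneq ab => ->.
  by rewrite gdiag.
have [F0 gF0 minF] := arg_minnP mu gE.
move: (gF0) => /andP[sF0 /forallP cF0].
have cF0' : forall x y, connect (rel_of F0) x y by move=> x y; have /forallP := cF0 x; apply.
have tF0 := twosets_sub sF0.
have cardF : forall F, F \subset E -> (#|F| < K)%N.
  by move=> F sF; rewrite /K ltnS; apply: subset_leq_card.
have tree : #|F0| = N.-1.
  have e0sym : symmetric (fun _ _ : 'I_N => false) by [].
  have := L2 e0sym tF0.
  rewrite ncomp_empty -(ncomp_eq (rel_ofE F0)).
  have rs : symmetric (rel_of F0) by move=> x y; rewrite /rel_of setUC.
  rewrite (ncomp_conn N0 (sym_connect_sym rs) cF0').
  move=> H; suff hb : forall s u v, s \in F0 -> s = [set u; v] ->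
     ~~ connect (Ru (fun _ _ => false) (F0 :\ s)) u v by have := H hb; lia.
  move=> s u v sS es; apply/negP => c.
  have gF1 : good (F0 :\ s).
    rewrite /good (subset_trans (subD1set _ _) sF0) /=.
    apply/forallP => x; apply/forallP => y.
    rewrite (eq_connect (rel_ofE _)) -(K_redundant x y (Ru_sym _ e0sym) c).
    rewrite -(eq_connect (Ru_add _ _ _ _)) -es setD1K //.
    by rewrite -(eq_connect (rel_ofE _)).
  have := minF _ gF1; rewrite /mu.
  have : (#|[set e in F0 :\ s | sigma e]| <= #|[set e in F0 | sigma e]|)%N.
    by apply: subset_leq_card; apply/subsetP => e; rewrite !inE => /andP[/andP[_ ->] ->].
  have : #|F0| = (#|F0 :\ s|).+1 by rewrite (cardsD1 s F0) sS.
  nia.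
exists F0; apply/andP; split.
  by apply/and3P; split => //; [rewrite tree | apply/forallP].
set S := [set e in F0 | sigma e].
have sS : S \subset F0 by apply/subsetP => e; rewrite inE => /andP[].
have tS : twosets S by apply: twosets_sub; apply: subset_trans sF0.
have cS : forall x y, connect (Ru rho S) x y.
  by move=> x y; apply: (connect_sub (sub_rel sF0)).
rewrite leqNgt; apply/negP => big.
case: (classic (exists s u v, [/\ s \in S, s = [set u; v] &
          connect (Ru rho (S :\ s)) u v])) => [[s [u [v [sS' es c]]]]|nb]; last first.
  move: (L2 rsym tS) => H.
  rewrite (ncomp_conn N0 (sym_connect_sym (Ru_sym _ rsym)) cS) in H.
  suff hb : forall s u v, s \in S -> s = [set u; v] ->
     ~~ connect (Ru rho (S :\ s)) u v by have := H hb; lia.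
  move=> s u v sS' es; apply/negP => c; apply: nb; by exists s, u, v.
pose P := [set e in E | ~~ sigma e].
pose G := P :|: (S :\ s).
have gG : good G.
  rewrite /good; apply/andP; split.
    rewrite subUset; apply/andP; split.
      by apply/subsetP => e; rewrite inE => /andP[].
    apply: subset_trans (subD1set _ _) (subset_trans sS sF0).
  apply/forallP => x; apply/forallP => y.
  have : connect (Ru rho (S :\ s)) x y.
    rewrite -(K_redundant x y (Ru_sym _ rsym) c).
    by rewrite -(eq_connect (Ru_add _ _ _ _)) -es setD1K.
  apply: connect_sub => a b; rewrite /Ru => /orP[h|h]; apply: connect1; rewrite /rel_of.
    by rewrite inE h orbT.
  by rewrite inE; case/andP: (H1 h) => h1 h2; rewrite inE h1 h2.
have := minF _ gG; rewrite /mu.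
have -> : [set e in G | sigma e] = S :\ s.
  apply/setP => e; rewrite !inE.
  case: (boolP (sigma e)) => se; rewrite ?andbT ?andbF //.
have : #|S| = (#|S :\ s|).+1 by rewrite (cardsD1 s S) sS'.
have : (#|G| < K)%N by apply: cardF; case/andP: gG.
rewrite -/S.
nia.
Qed.
End Sig.

Local Open Scope ring_scope.
Definition kneg F := #|[set e in F | neg_edge g e]|.

Lemma weight t F : F \subset E ->
  edge_prod (gamma_t g t) F = `|piT g F| * (- t) ^+ kneg F.
Proof.
move=> sF.
rewrite /piT /edge_prod !pair_big_dep normr_prod.
pose A := [pred p : 'I_N * 'I_N | (p.1 < p.2)%N && ([set p.1; p.2] \in F)].
have gA : forall p, A p -> g p.1 p.2 != 0.
  by move=> p; rewrite inE => /andP[_ /(subsetP sF)]; rewrite edge_in => /andP[].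
have e1 : forall p, A p -> gamma_t g t p.1 p.2 = `|g p.1 p.2| * (if g p.1 p.2 < 0 then - t else 1).
  move=> p /gA gp; rewrite /gamma_t.
  case: ltrgt0P gp => // h _.
    by rewrite mulr1.
  by rewrite mulrNN mulrC.
rewrite (eq_bigr _ (fun p h => e1 p h)).
rewrite big_split /=; congr (_ * _).
rewrite -big_mkcondr /= prodr_const.
congr (_ ^+ _).
pose D := [set p : 'I_N * 'I_N | (p.1 < p.2)%N && ([set p.1; p.2] \in F) && (g p.1 p.2 < 0)].
rewrite (@eq_card _ _ (mem D)); last by move=> p; rewrite inE.
rewrite /kneg -(@card_in_imset _ _ (fun p => [set p.1; p.2]) D); last first.
  move=> [a b] [c d]; rewrite !inE /= => /andP[/andP[ab _] _] /andP[/andP[cd _] _] /set2_eq.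
  case=> [[-> ->] //| [ea eb]]; subst; exfalso; move: (ltn_trans ab cd); by rewrite ltnn.
apply: eq_card => e; apply/imsetP/idP.
  move=> [[a b]]; rewrite !inE /= => /andP[/andP[_ h1] h2] ->.
  by rewrite h1 neg_two.
rewrite inE => /andP[eF].
have := subsetP sF _ eF; rewrite inE => /existsP[a /existsP[b /andP[/andP[ab _] /eqP ee]]].
rewrite ee neg_two => gab.
case: (ltngtP a b) => [lab|lba|eab]; last by move/val_inj: eab ab => ->; rewrite eqxx.
  by exists (a, b); rewrite // inE /= lab gab -ee eF.
exists (b, a); last by rewrite /= setUC.
by rewrite inE /= lba gsym gab setUC -ee eF.
Qed.

Lemma piT_neq0 F : F \subset E -> piT g F != 0.
Proof.
move=> sF; rewrite /piT /edge_prod pair_big_dep; apply/prodf_neq0 => p /= /andP[_ /(subsetP sF)].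
by rewrite edge_in => /andP[].
Qed.

Lemma pos_sym : symmetric (pos_rel g).
Proof. by move=> x y; rewrite /pos_rel gsym. Qed.
Lemma neg_sym : symmetric (neg_rel g).
Proof. by move=> x y; rewrite /neg_rel gsym. Qed.

Lemma H1pos x y : pos_rel g x y -> ([set x; y] \in E) && ~~ neg_edge g [set x; y].
Proof.
rewrite /pos_rel => h; rewrite edge_in neg_two (lt_gtF h) (gt_eqF h) andbT /= andbT.
by apply: contraTneq h => ->; rewrite gdiag ltxx.
Qed.
Lemma H2pos x y : [set x; y] \in E -> ~~ neg_edge g [set x; y] -> pos_rel g x y.
Proof.
by rewrite edge_in neg_two /pos_rel => /andP[_ gne] h; rewrite lt0r gne /= leNgt.
Qed.
Lemma H1neg x y : neg_rel g x y -> ([set x; y] \in E) && ~~ ~~ neg_edge g [set x; y].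
Proof.
rewrite /neg_rel => h; rewrite edge_in negbK neg_two h (lt_eqF h) andbT /= andbT.
by apply: contraTneq h => ->; rewrite gdiag ltxx.
Qed.
Lemma H2neg x y : [set x; y] \in E -> ~~ ~~ neg_edge g [set x; y] -> neg_rel g x y.
Proof. by rewrite negbK neg_two. Qed.

Lemma tree_bounds F : (0 < N)%N -> spanning_tree g F ->
  ((ncomp (pos_rel g)).-1 <= kneg F <= N - ncomp (neg_rel g))%N.
Proof.
move=> N0 tF.
have b1 := bound pos_sym H2pos N0 tF.
have b2 := bound (sigma := fun e => ~~ neg_edge g e) neg_sym H2neg N0 tF.
have cs := card_split F (neg_edge g).
move: (tF) => /and3P[_ /eqP cF _].
rewrite /kneg; lia.
Qed.

Lemma exists_lo : (0 < N)%N -> connected_rel (adj_rel g) ->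
  exists F, spanning_tree g F && (kneg F == (ncomp (pos_rel g)).-1).
Proof.
move=> N0 cg; have [F /andP[tF kF]] := exist_tree pos_sym H1pos H2pos N0 cg.
exists F; rewrite tF /=; have := tree_bounds N0 tF; rewrite /kneg in kF *; lia.
Qed.

Lemma exists_hi : (0 < N)%N -> connected_rel (adj_rel g) ->
  exists F, spanning_tree g F && (kneg F == N - ncomp (neg_rel g))%N.
Proof.
move=> N0 cg.
have [F /andP[tF kF]] := exist_tree (sigma := fun e => ~~ neg_edge g e) neg_sym H1neg H2neg N0 cg.
exists F; rewrite tF /=; have := tree_bounds N0 tF.
have := ncomp_gt0 N0 (sym_connect_sym neg_sym).
have cs := card_split F (neg_edge g).
move: (tF) => /and3P[_ /eqP cF _].
rewrite /kneg in kF *; lia.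
Qed.

End G.

Local Open Scope ring_scope.
Theorem mainTheorem3 (R : realFieldType) (N : nat) (g : 'I_N -> 'I_N -> R) :
  (0 < N)%N ->
  signed_graph g ->
  connected_rel (adj_rel g) ->
  let cp := ncomp (pos_rel g) in
  let cm := ncomp (neg_rel g) in
  [/\ (forall t : R,
         Mw g (gamma_t g t) =
         \sum_(cp.-1 <= k < (N - cm).+1) coef_a g k * (- t) ^+ k),
      (forall k, 0 <= coef_a g k),
      0 < coef_a g cp.-1 &
      0 < coef_a g (N - cm)].
Proof.
move=> N0 [gsym gdiag] cg cp cm.
have pos_term : forall k, (exists F, spanning_tree g F && (kneg g F == k)) -> 0 < coef_a g k.
  move=> k [F /andP[tF kF]]; rewrite /coef_a (bigD1 F) /=; last first.
    by rewrite /spanning_tree_k tF.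
  apply: (@lt_le_trans _ _ `|piT g F|).
    rewrite normr_gt0; apply: piT_neq0 => //; by case/and3P: tF.
  by rewrite lerDl; apply: sumr_ge0 => G _; apply: normr_ge0.
split.
- move=> t; rewrite /Mw.
  rewrite (eq_bigr (fun F => `|piT g F| * (- t) ^+ kneg g F)); last first.
    by move=> F /and3P[sF _ _]; apply: weight.
  rewrite /coef_a.
  rewrite [RHS](eq_bigr (fun k => \sum_(F | spanning_tree_k g k F) `|piT g F| * (-t)^+k)); last first.
    by move=> k _; rewrite mulr_suml.
  rewrite (exchange_big_dep (spanning_tree g)) /=; last by move=> k F _ /andP[].
  apply: eq_bigr => F tF.
  rewrite (eq_bigl (fun k => k == kneg g F)); last first.
    by move=> k; rewrite /spanning_tree_k tF /= eq_sym.
  rewrite big_nat1_eq.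
  by have := tree_bounds gsym N0 tF; rewrite -/cp -/cm ltnS => ->.
- by move=> k; apply: sumr_ge0 => F _; apply: normr_ge0.
- by apply: pos_term; apply: exists_lo.
- by apply: pos_term; apply: exists_hi.
Qed.
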